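(* Let $\mathbf L$ be a bounded lattice with canonical polarity $(X,\parallel,Y)$ and spaces $\mathfrak X=(X,\mathcal B)$, $\mathfrak Y=(Y,\mathcal C)$, where $\mathcal B=\{X_a:a\in L\}$ and $\mathcal C=\{Y^a:a\in L\}$. Then $\mathcal B$ is exactly the family of subsets of $X$ that are both compact-open in $\mathfrak X$ and Galois stable, and $\mathcal C$ is exactly the family of subsets of $Y$ that are compact-open in $\mathfrak Y$ and Galois co-stable. Moreover $\mathcal B$ and $\mathcal C$ are dually isomorphic bounded lattices (via $A\mapsto A'$, with $(X_a)'=Y^a$), $\mathcal B$ a sublattice of $\mathcal G(X)$ and $\mathcal C$ a sublattice of $\mathcal G(Y)$.
   Context: Canonical polarity of a bounded lattice $\mathbf L$: $X$ is the set of proper filters of $\mathbf L$, $Y$ the set of proper ideals, and $x\parallel y$ iff $x\cap y\neq\emptyset$. For $a\in L$: $X_a=\{x\in X:a\in x\}$, $Y^a=\{y\in Y:a\in y\}$. $\mathfrak X$ (resp. $\mathfrak Y$) is $X$ (resp. $Y$) with the topology generated by the basis $\mathcal B$ (resp. $\mathcal C$). For $U\subseteq X$, $U'=\{y\in Y:\forall x\in U\;x\parallel y\}$; for $V\subseteq Y$, $V'=\{x\in X:\forall y\in V\;x\parallel y\}$. Stable sets $A=A''\subseteq X$ form the complete lattice $\mathcal G(X)$ (meets = intersections, joins $(\bigcup A_j)''$); co-stable sets $B=B''\subseteq Y$ form $\mathcal G(Y)$. *)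

(* Defs.v *)
From mathcomp Require Import all_boot all_order.
From Stdlib Require Import List.
Set Implicit Arguments.
Unset Strict Implicit.
Unset Printing Implicit Defensive.
Import Order.Theory.

Section Polarity.
Variables (disp : Order.disp_t) (L : tbLatticeType disp).

Definition subP {T : Type} (U V : T -> Prop) : Prop := forall x, U x -> V x.

Definition is_filter (F : L -> Prop) : Prop :=
  (exists a, F a) /\
  (forall a b : L, F a -> Order.le a b -> F b) /\
  (forall a b : L, F a -> F b -> F (Order.meet a b)).

Definition is_ideal (I : L -> Prop) : Prop :=
  (exists a, I a) /\
  (forall a b : L, I b -> Order.le a b -> I a) /\
  (forall a b : L, I a -> I b -> I (Order.join a b)).

Definition proper (P : L -> Prop) : Prop := exists a, ~ P a.

(* X = proper filters, Y = proper ideals, as subsets of the powerset of L *)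
Definition Xset (x : L -> Prop) : Prop := is_filter x /\ proper x.
Definition Yset (y : L -> Prop) : Prop := is_ideal y /\ proper y.

Definition par (x y : L -> Prop) : Prop := exists a, x a /\ y a.

Definition Xa (a : L) : (L -> Prop) -> Prop := fun x => Xset x /\ x a.
Definition Ya (a : L) : (L -> Prop) -> Prop := fun y => Yset y /\ y a.

Definition primeX (U : (L -> Prop) -> Prop) : (L -> Prop) -> Prop :=
  fun y => Yset y /\ forall x, U x -> par x y.
Definition primeY (V : (L -> Prop) -> Prop) : (L -> Prop) -> Prop :=
  fun x => Xset x /\ forall y, V y -> par x y.

Definition stableX (A : (L -> Prop) -> Prop) : Prop := A = primeY (primeX A).
Definition costableY (B : (L -> Prop) -> Prop) : Prop := B = primeX (primeY B).

(* topologies generated by the bases B = {X_a} and C = {Y^a}: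
   open sets are unions of basic sets *)
Definition openX (U : (L -> Prop) -> Prop) : Prop :=
  exists S : L -> Prop, U = fun x => exists a, S a /\ Xa a x.
Definition openY (U : (L -> Prop) -> Prop) : Prop :=
  exists S : L -> Prop, U = fun y => exists a, S a /\ Ya a y.

Definition compact_in (opn : ((L -> Prop) -> Prop) -> Prop)
  (K : (L -> Prop) -> Prop) : Prop :=
  forall Cov : ((L -> Prop) -> Prop) -> Prop,
    (forall V, Cov V -> opn V) ->
    (forall x, K x -> exists V, Cov V /\ V x) ->
    exists s : list ((L -> Prop) -> Prop),
      (forall V, In V s -> Cov V) /\
      (forall x, K x -> exists V, In V s /\ V x).

Definition compactX := compact_in openX.
Definition compactY := compact_in openY.

Definition inB (A : (L -> Prop) -> Prop) : Prop := exists a, A = Xa a.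
Definition inC (B : (L -> Prop) -> Prop) : Prop := exists a, B = Ya a.

Definition unionP {T : Type} (U V : T -> Prop) : T -> Prop := fun x => U x \/ V x.
Definition interP {T : Type} (U V : T -> Prop) : T -> Prop := fun x => U x /\ V x.

End Polarity.

Arguments is_filter {disp} L F.
Arguments is_ideal {disp} L I.
Arguments proper {disp} L P.
Arguments Xset {disp} L x.
Arguments Yset {disp} L y.
Arguments par {disp} L x y.
Arguments Xa {disp L} a _.
Arguments Ya {disp L} a _.
Arguments primeX {disp} L U _.
Arguments primeY {disp} L V _.
Arguments stableX {disp} L A.
Arguments costableY {disp} L B.
Arguments openX {disp} L U.
Arguments openY {disp} L U.
Arguments compact_in {disp} L opn K.
Arguments compactX {disp} L K.
Arguments compactY {disp} L K.
Arguments inB {disp} L A.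
Arguments inC {disp} L B.

(* Main.v *)
Require Import Defs.
From mathcomp Require Import all_boot all_order.
From Stdlib Require List.
From Stdlib Require Import FunctionalExtensionality PropExtensionality.
Set Implicit Arguments.
Unset Strict Implicit.
Import Order.Theory.
Local Open Scope order_scope.

Section Gen.
Variables (disp : Order.disp_t) (L : tbLatticeType disp).

Lemma pext (P Q : Prop) : (P <-> Q) -> P = Q.
Proof. exact: propositional_extensionality. Qed.

Definition up (a : L) : L -> Prop := fun b => a <= b.

Lemma up_X (a : L) : a != \bot -> Xset L (up a).
Proof.
move=> na; split; last first.
  exists \bot => h; move: na; by rewrite /up lex0 in h; rewrite h.
split; first by exists a; rewrite /up.
split; first by move=> b c hb hc; exact: le_trans hb hc.
by move=> b c hb hc; rewrite /up lexI hb hc.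
Qed.

Lemma filter_up (x : L -> Prop) a b : Xset L x -> x a -> a <= b -> x b.
Proof. by move=> [[_ [h _]] _] xa ab; exact: h xa ab. Qed.

Lemma ideal_down (y : L -> Prop) a b : Yset L y -> y b -> a <= b -> y a.
Proof. by move=> [[_ [h _]] _] yb ab; exact: h yb ab. Qed.

Lemma Xa_bot x : ~ Xa (\bot : L) x.
Proof.
move=> [Xx xb]; have [_ [b nb]] := Xx; apply: nb; exact: filter_up Xx xb (le0x b).
Qed.

Lemma primeX_Xa (a : L) : primeX L (Xa a) = Ya a.
Proof.
apply: functional_extensionality => y; apply: pext; split.
  move=> [Yy H]; split => //.
  case: (eqVneq a \bot) => [->|na].
    have [[[b yb] _] _] := Yy; exact: ideal_down Yy yb (le0x b).
  have [b [ab yb]] := H (up a) (conj (up_X na) (lexx a)).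
  exact: ideal_down Yy yb ab.
move=> [Yy ya]; split => // x [_ xa]; by exists a.
Qed.
End Gen.
Section Dual.
Variables (disp : Order.disp_t) (L : tbLatticeType disp).
Let Ld := (L^d)%type.

Lemma XsetD : Xset Ld = Yset L.
Proof.
apply: functional_extensionality => x; apply: pext.
rewrite /Xset /Yset /is_filter /is_ideal /proper.
split=> [[[h1 [h2 h3]] h4]|[[h1 [h2 h3]] h4]]; (split; last by []); (split; first by []); split.
- by move=> a b hb ab; apply: (h2 b a hb); rewrite leEdual.
- by move=> a b ha hb; have := h3 a b ha hb; rewrite ?meetEdual ?joinEdual.
- by move=> a b ha ab; apply: (h2 b a ha); rewrite leEdual in ab.
- by move=> a b ha hb; have := h3 a b ha hb; rewrite ?meetEdual ?joinEdual.
Qed.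

Lemma YsetD : Yset Ld = Xset L.
Proof.
apply: functional_extensionality => x; apply: pext.
rewrite /Xset /Yset /is_filter /is_ideal /proper.
split=> [[[h1 [h2 h3]] h4]|[[h1 [h2 h3]] h4]]; (split; last by []); (split; first by []); split.
- by move=> a b ha ab; apply: (h2 b a ha); rewrite leEdual.
- by move=> a b ha hb; have := h3 a b ha hb; rewrite ?meetEdual ?joinEdual.
- by move=> a b hb ab; apply: (h2 b a hb); rewrite leEdual in ab.
- by move=> a b ha hb; have := h3 a b ha hb; rewrite ?meetEdual ?joinEdual.
Qed.

Lemma par_sym (x y : L -> Prop) : par L x y = par L y x.
Proof. by apply: pext; split=> [[a [h1 h2]]|[a [h1 h2]]]; exists a. Qed.

Lemma XaD (a : L) : @Xa _ Ld a = Ya a.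
Proof. by rewrite /Xa /Ya XsetD. Qed.
Lemma YaD (a : L) : @Ya _ Ld a = Xa a.
Proof. by rewrite /Xa /Ya YsetD. Qed.

Lemma primeXD : primeX Ld = primeY L.
Proof.
apply: functional_extensionality => U; apply: functional_extensionality => y.
rewrite /primeX /primeY YsetD; apply: pext; split=> -[h1 h2]; split=> // x hx;
  have [c [h3 h4]] := h2 x hx; by exists c.
Qed.
Lemma primeYD : primeY Ld = primeX L.
Proof.
apply: functional_extensionality => U; apply: functional_extensionality => y.
rewrite /primeX /primeY XsetD; apply: pext; split=> -[h1 h2]; split=> // x hx;
  have [c [h3 h4]] := h2 x hx; by exists c.
Qed.

Lemma XaDf : @Xa _ Ld = @Ya _ L.
Proof. apply: functional_extensionality => a; exact: XaD. Qed.
Lemma openXD : openX Ld = openY L.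
Proof. by rewrite /openX /openY XaDf. Qed.
Lemma compactXD : compactX Ld = compactY L.
Proof. by rewrite /compactX /compactY openXD. Qed.
Lemma stableXD : stableX Ld = costableY L.
Proof. by rewrite /stableX /costableY primeXD primeYD. Qed.
Lemma inBD : inB Ld = inC L.
Proof. by rewrite /inB /inC XaDf. Qed.
End Dual.

Section Main.
Variables (disp : Order.disp_t) (L : tbLatticeType disp).

Lemma primeY_Ya (a : L) : primeY L (Ya a) = Xa a.
Proof. have := @primeX_Xa _ (L^d)%type a. by rewrite XaD YaD primeXD. Qed.

Lemma Xa_open (a : L) : openX L (Xa a).
Proof.
exists (fun b => b = a); apply: functional_extensionality => x; apply: pext.
by split=> [h|[b [-> h]]] //; exists a.
Qed.

Lemma Xa_compact (a : L) : compactX L (Xa a).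
Proof.
move=> Cov hopen hcov.
case: (eqVneq a \bot) => [->|na].
  by exists nil; split=> [V []|x /Xa_bot []].
have [V [cV Vu]] := hcov _ (conj (@up_X _ _ a na) (lexx a)).
have [S eS] := hopen V cV.
move: (Vu); rewrite eS => -[b [Sb [_ ab]]].
exists (V :: nil); split=> [W [<-|[]]//|x xa].
exists V; split; first by left.
rewrite eS; exists b; split=> //; split; first by case: xa.
exact: filter_up (proj1 xa) (proj2 xa) ab.
Qed.

Lemma Xa_stable (a : L) : stableX L (Xa a).
Proof. by rewrite /stableX primeX_Xa primeY_Ya. Qed.

Lemma list_join (S : L -> Prop) (s : list ((L->Prop)->Prop)) :
  (forall V, List.In V s -> exists a, S a /\ V = Xa a) ->
  exists c, (forall x, (exists V, List.In V s /\ V x) -> Xa c x) /\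
            (forall y, Yset L y -> (forall V, List.In V s -> forall x, V x -> par L x y) -> y c).
Proof.
elim: s => [_|V s IH hs].
  exists \bot; split=> [x [V [[] _]]|y Yy _].
  have [[[b yb] _] _] := Yy; exact: ideal_down Yy yb (le0x b).
have [a [Sa eV]] := hs V (or_introl erefl).
have [c [h1 h2]] := IH (fun W hW => hs W (or_intror hW)).
exists (a `|` c); split.
  move=> x [W [[eW|hW] Wx]].
    move: Wx; rewrite -eW eV => -[Xx xa]; split=> //; exact: filter_up Xx xa (leUl a c).
  have [Xx xc] := h1 x (ex_intro _ W (conj hW Wx)); split=> //; exact: filter_up Xx xc (leUr c a).
move=> y Yy H.
have ya : y a.
  have : primeX L (Xa a) y by split=> // x xa; apply: (H V (or_introl erefl)); rewrite eV.
  by rewrite primeX_Xa => -[].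
have yc := h2 y Yy (fun W hW => H W (or_intror hW)).
case: Yy => [[_ [_ hj]] _]; exact: hj.
Qed.

Lemma char_B A : inB L A <-> openX L A /\ compactX L A /\ stableX L A.
Proof.
split.
  move=> [a ->]; split; [exact: Xa_open | split; [exact: Xa_compact|exact: Xa_stable]].
move=> [[S eA] [cA sA]].
pose Cov := fun V => exists a, S a /\ V = Xa a.
have hop : forall V, Cov V -> openX L V by move=> V [a [_ ->]]; exact: Xa_open.
have hc : forall x, A x -> exists V, Cov V /\ V x.
  move=> x; rewrite {1}eA => -[a [Sa xa]]; exists (Xa a); split=> //; by exists a.
have [s [hs hcov]] := cA Cov hop hc.
have [c [h1 h2]] := @list_join S s hs.
exists c; apply: functional_extensionality => x; apply: pext; split.
  move=> Ax; exact: h1 (hcov x Ax).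
move=> xc; rewrite sA; split; first by case: xc.
move=> y [Yy Hy]; exists c; split; first by case: xc.
apply: (h2 y Yy) => V hV x' Vx'; apply: Hy.
have [a [Sa eV]] := hs V hV; rewrite eA; exists a; split=> //; by rewrite -eV.
Qed.

Lemma B_bounds (a : L) : subP (Xa (\bot%O : L)) (Xa a) /\ subP (Xa a) (Xa (\top%O : L)).
Proof.
by split=> x [Xx xb]; split=> //; [exact: filter_up Xx xb (le0x a)|exact: filter_up Xx xb (lex1 a)].
Qed.

Lemma B_lattice A1 A2 : inB L A1 -> inB L A2 ->
  inB L (interP A1 A2) /\ inB L (primeY L (primeX L (unionP A1 A2))).
Proof.
move=> [a ->] [b ->]; split.
  exists (a `&` b); apply: functional_extensionality => x; apply: pext; split.
    move=> [[Xx xa] [_ xb]]; split=> //; case: Xx => [[_ [_ hm]] _]; exact: hm.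
  move=> [Xx xab]; split; split=> //;
    [exact: filter_up Xx xab (leIl a b)|exact: filter_up Xx xab (leIr b a)].
exists (a `|` b).
suff -> : primeX L (unionP (Xa a) (Xa b)) = Ya (a `|` b) by rewrite primeY_Ya.
apply: functional_extensionality => y; apply: pext; split.
  move=> [Yy H]; split=> //.
  have : primeX L (Xa a) y by split=> // x xa; apply: H; left.
  rewrite primeX_Xa => -[_ ya].
  have : primeX L (Xa b) y by split=> // x xb; apply: H; right.
  rewrite primeX_Xa => -[_ yb].
  case: Yy => [[_ [_ hj]] _]; exact: hj.
move=> [Yy yab]; split=> // x [[_ xa]|[_ xb]].
  by exists a; split=> //; exact: ideal_down Yy yab (leUl a b).
by exists b; split=> //; exact: ideal_down Yy yab (leUr b a).
Qed.
End Main.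

Theorem proposition4p4 (disp : Order.disp_t) (L : tbLatticeType disp) :
  (* B = compact-open Galois-stable subsets of X *)
  (forall A : (L -> Prop) -> Prop,
     inB L A <-> (openX L A /\ compactX L A /\ stableX L A)) /\
  (* C = compact-open Galois-co-stable subsets of Y *)
  (forall B : (L -> Prop) -> Prop,
     inC L B <-> (openY L B /\ compactY L B /\ costableY L B)) /\
  (* (X_a)' = Y^a and (Y^a)' = X_a *)
  (forall a : L, primeX L (Xa a) = Ya a /\ primeY L (Ya a) = Xa a) /\
  (* A |-> A' is a dual (order-reversing) isomorphism from B onto C *)
  (forall A, inB L A -> inC L (primeX L A)) /\
  (forall B, inC L B -> exists A, inB L A /\ primeX L A = B) /\
  (forall A1 A2, inB L A1 -> inB L A2 ->
     (subP A1 A2 <-> subP (primeX L A2) (primeX L A1))) /\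
  (* B is a bounded lattice, a sublattice of G(X) *)
  (forall a : L, subP (Xa (\bot%O : L)) (Xa a) /\ subP (Xa a) (Xa (\top%O : L))) /\
  (forall A1 A2, inB L A1 -> inB L A2 ->
     inB L (interP A1 A2) /\ inB L (primeY L (primeX L (unionP A1 A2)))) /\
  (* C is a bounded lattice, a sublattice of G(Y) *)
  (forall a : L, subP (Ya (\top%O : L)) (Ya a) /\ subP (Ya a) (Ya (\bot%O : L))) /\
  (forall B1 B2, inC L B1 -> inC L B2 ->
     inC L (interP B1 B2) /\ inC L (primeX L (primeY L (unionP B1 B2)))).
Proof.
split; first exact: char_B.
split.
  move=> B; have := @char_B _ (L^d)%type B.
  by rewrite inBD openXD compactXD stableXD.
split; first by move=> a; split; [exact: primeX_Xa | exact: primeY_Ya].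
split; first by move=> A [a ->]; exists a; exact: primeX_Xa.
split; first by move=> B [a ->]; exists (Xa a); split; [by exists a | exact: primeX_Xa].
split.
  move=> A1 A2 [a ->] [b ->]; split.
    move=> h y [Yy H]; split=> // x xa; exact: H x (h x xa).
  rewrite !primeX_Xa -[Xa a]primeY_Ya -[Xa b]primeY_Ya => h x [Xx H].
  split=> // y yb; exact: H y (h y yb).
split; first exact: B_bounds.
split; first exact: B_lattice.
split.
  move=> a; have := @B_bounds _ (L^d)%type a; rewrite XaDf => h; exact: h.
move=> B1 B2 h1 h2; have := @B_lattice _ (L^d)%type B1 B2.
rewrite inBD primeXD primeYD => h; exact: h h1 h2.
Qed.
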